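(* Let $n\ge 1$, let $a=(a_m)_{m\ge 0}$ and $b=(b_m)_{m\ge0}$ be complex sequences with $b_0=0$ and $b_m\neq 0$ for all $m\ge1$, and let $(p_m)_{m\ge0}$ be the monic polynomials defined by $p_{-1}=0$, $p_0=1$, $p_{m+1}(x)=(x-a_m)p_m(x)-b_mp_{m-1}(x)$ for $m\ge0$; write $p_m(x)=\sum_{l=0}^{m}p^m_l x^l$ with $p^m_m=1$. Then the assignment $$W:\ \tilde t^{(r)}_{ij}\longmapsto t^{(r)}_{ij}+\sum_{l=0}^{r-1}p^r_l\,t^{(l)}_{ij}\qquad(1\le i,j\le n,\ r\ge1)$$ extends to an algebra isomorphism $W: OY(\mathfrak{gl}_n,a,b)\to Y(\mathfrak{gl}_n)$. On generating series it is given, for $i,j=1,\dots,n$, by $$W(\tilde T_{ij}(u))=\frac{1}{2\pi i}\oint_{|z|=1}K\!\left(z,\tfrac1u\right)t_{ij}(z)\,\frac{dz}{z}=\sum_{l\ge0}u^{-l}\sum_{m=0}^{l}p^l_m\,t^{(m)}_{ij}.$$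
   Context: The Yangian $Y(\mathfrak{gl}_n)$ is the unital associative $\mathbb C$-algebra with generators $t^{(r)}_{ij}$ ($1\le i,j\le n$, $r\in\{1,2,\dots\}$) and defining relations $[t^{(r+1)}_{ij},t^{(s)}_{kl}]-[t^{(r)}_{ij},t^{(s+1)}_{kl}]=t^{(r)}_{kj}t^{(s)}_{il}-t^{(s)}_{kj}t^{(r)}_{il}$ for all $r,s\ge0$ and all $i,j,k,l$, where $t^{(0)}_{ij}=\delta_{ij}$; put $t_{ij}(z)=\sum_{r\ge0}t^{(r)}_{ij}z^{-r}$. For complex sequences $a,b$, $OY(\mathfrak{gl}_n,a,b)$ is the unital associative $\mathbb C$-algebra with generators $\tilde t^{(r)}_{ij}$ ($1\le i,j\le n$, $r\ge1$) and defining relations $$[\tilde t^{(r+1)}_{ij}+a_r\tilde t^{(r)}_{ij}+b_r\tilde t^{(r-1)}_{ij},\tilde t^{(s)}_{kl}]-[\tilde t^{(r)}_{ij},\tilde t^{(s+1)}_{kl}+a_s\tilde t^{(s)}_{kl}+b_s\tilde t^{(s-1)}_{kl}]=\tilde t^{(r)}_{kj}\tilde t^{(s)}_{il}-\tilde t^{(s)}_{kj}\tilde t^{(r)}_{il}$$ for all $r,s\ge0$ and all $i,j,k,l$, with conventions $\tilde t^{(0)}_{ij}=\delta_{ij}$, $\tilde t^{(-1)}_{ij}=0$; put $\tilde T_{ij}(u)=\delta_{ij}+\sum_{r\ge1}\tilde t^{(r)}_{ij}u^{-r}$. The generating function of the polynomials is $K(z,u)=\sum_{l\ge0}p_l(z)u^l$.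 The contour integral is understood formally: $\frac{1}{2\pi i}\oint_{|z|=1}F(z)\frac{dz}{z}$ denotes the coefficient of $z^0$ of the formal expression $F(z)$, taken coefficientwise in $u^{-1}$. *)

(* Defs.v *)
From mathcomp Require Import all_boot all_algebra.
From mathcomp Require Import complex.
From mathcomp Require Import reals Rstruct.
Set Implicit Arguments. Unset Strict Implicit. Unset Printing Implicit Defensive.
Import GRing.Theory.
Local Open Scope ring_scope.

Notation CC := ((Rdefinitions.R)[i]) (only parsing).

Section Defs.
Variable n : nat.

(* A family of generators  gen r i j  standing for  t^{(r+1)}_{ij}  (r >= 0,
   i.e. superscripts r+1 >= 1); indices 1..n are encoded as 'I_n. *)
Definition gens (A : algType CC) := nat -> 'I_n -> 'I_n -> A.

Definition tcoef (A : algType CC) (g : gens A) (r : nat) (i j : 'I_n) : A :=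
  if r is r'.+1 then g r' i j else (i == j)%:R.

Definition tprev (A : algType CC) (g : gens A) (r : nat) (i j : 'I_n) : A :=
  if r is r'.+1 then tcoef g r' i j else 0.

Definition comm (A : algType CC) (x y : A) : A := x * y - y * x.

Definition yangian_rel (A : algType CC) (g : gens A) : Prop :=
  forall (r s : nat) (i j k l : 'I_n),
    comm (tcoef g r.+1 i j) (tcoef g s k l) - comm (tcoef g r i j) (tcoef g s.+1 k l)
    = tcoef g r k j * tcoef g s i l - tcoef g s k j * tcoef g r i l.

Definition oy_shift (a b : nat -> CC) (A : algType CC) (g : gens A)
    (r : nat) (i j : 'I_n) : A :=
  tcoef g r.+1 i j + a r *: tcoef g r i j + b r *: tprev g r i j.

Definition oy_rel (a b : nat -> CC) (A : algType CC) (g : gens A) : Prop :=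
  forall (r s : nat) (i j k l : 'I_n),
    comm (oy_shift a b g r i j) (tcoef g s k l) - comm (tcoef g r i j) (oy_shift a b g s k l)
    = tcoef g r k j * tcoef g s i l - tcoef g s k j * tcoef g r i l.

(* (A, g) is a presentation of the algebra with generators g subject to the
   relations rel: the relations hold in A, and for every C-algebra B with a
   family h satisfying rel there is a unique C-algebra morphism A -> B sending
   g to h (universal property of the algebra defined by generators and
   relations). *)
Definition presented_by (rel : forall B : algType CC, gens B -> Prop)
    (A : algType CC) (g : gens A) : Prop :=
  rel A g /\
  forall (B : algType CC) (h : gens B), rel B h ->
    (exists f : {lrmorphism A -> B}, forall r i j, f (g r i j) = h r i j) /\
    (forall f1 f2 : {lrmorphism A -> B},
        (forall r i j, f1 (g r i j) = h r i j) ->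
        (forall r i j, f2 (g r i j) = h r i j) ->
        forall x, f1 x = f2 x).

End Defs.

(* The monic polynomials p_m:  p_{-1} = 0, p_0 = 1,
   p_{m+1} = (x - a_m) p_m - b_m p_{m-1}.  ppair m = (p_{m-1}, p_m). *)
Fixpoint ppair (a b : nat -> CC) (m : nat) : {poly CC} * {poly CC} :=
  match m with
  | 0 => (0, 1)
  | m'.+1 => let: (q, p) := ppair a b m' in
             (p, ('X - (a m')%:P) * p - (b m')%:P * q)
  end.

Definition orthpoly (a b : nat -> CC) (m : nat) : {poly CC} := (ppair a b m).2.

(* Formal coefficient of z^0 in  P(z) * sum_{r>=0} c_r z^{-r},  where P is a
   polynomial in z:  this is  sum_k P_k c_k. *)
Definition const_term (A : algType CC) (P : {poly CC}) (c : nat -> A) : A :=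
  \sum_(k < size P) P`_k *: c k.

(* Main.v *)
Require Import Defs.
From mathcomp Require Import all_boot all_algebra.
From mathcomp Require Import complex.
From mathcomp Require Import reals Rstruct.
From mathcomp Require Import ring.
Set Implicit Arguments. Unset Strict Implicit. Unset Printing Implicit Defensive.
Import GRing.Theory.
Local Open Scope ring_scope.

Section Poly.
Variables (a b : nat -> CC).
Local Notation p := (orthpoly a b).
Definition prevp m := if m is m'.+1 then p m' else 0.

Lemma ppair_fst m : (ppair a b m).1 = prevp m.
Proof. case: m => //= m. rewrite /orthpoly. by case: (ppair a b m). Qed.

Lemma p_rec m : p m.+1 = ('X - (a m)%:P) * p m - (b m)%:P * prevp m.
Proof. rewrite -ppair_fst /orthpoly /=. by case: (ppair a b m). Qed.

Lemma Xp m : 'X * p m = p m.+1 + a m *: p m + b m *: prevp m.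
Proof. rewrite p_rec -!mul_polyC. ring. Qed.

Lemma p0 : p 0 = 1. Proof. by []. Qed.

Lemma coef_psucc m k : (p m.+1)`_k =
  (if k is k'.+1 then (p m)`_k' else 0) - a m * (p m)`_k - b m * (prevp m)`_k.
Proof.
have -> : p m.+1 = 'X * p m - a m *: p m - b m *: prevp m.
  by rewrite Xp -!mul_polyC; ring.
by rewrite !coefB !coefZ coefXM; case: k.
Qed.

Lemma p_props m : ((p m)`_m = 1 /\ forall k, (m < k)%N -> (p m)`_k = 0)
   /\ (forall k, (m <= k)%N -> (prevp m)`_k = 0).
Proof.
elim: m => [|m [[IH1 IH2] IH3]].
  split; last by move=> k _; rewrite coef0.
  by rewrite p0; split; [rewrite coef1|move=> [|k]; rewrite coef1].
split; last by move=> k hk; exact: IH2.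
split.
  by rewrite coef_psucc IH1 IH2 // IH3 // !mulr0 !subr0.
move=> [|k] // hk; rewrite ltnS in hk.
rewrite coef_psucc (IH2 k hk) (IH2 k.+1 (leqW hk)) (IH3 k.+1 (leqW (ltnW hk))).
by rewrite !mulr0 !subr0.
Qed.

Lemma p_top m : (p m)`_m = 1. Proof. by case: (p_props m) => [[]]. Qed.
Lemma p_hi m k : (m < k)%N -> (p m)`_k = 0. Proof. by case: (p_props m) => [[_ H] _]; apply: H. Qed.
Lemma size_p m : (size (p m) <= m.+1)%N.
Proof. by apply/leq_sizeP => k hk; apply: p_hi. Qed.
End Poly.

Section Alg.
Variables (n : nat) (a b : nat -> CC) (A : algType CC).
Local Notation p := (orthpoly a b).
Local Notation fam := ('I_n -> 'I_n -> A).

Lemma sum_sel (V : lmodType CC) (F : nat -> V) m N : (m < N)%N ->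
  \sum_(k < N) (k == m :> nat)%:R *: F k = F m.
Proof.
move=> hm; rewrite (bigD1 (Ordinal hm)) //= eqxx scale1r big1 ?addr0 //.
move=> k nk; rewrite (_ : (k == m :> nat) = false) ?scale0r //.
apply/negbTE; apply: contra nk => /eqP e; apply/eqP/val_inj => /=; exact: e.
Qed.

Definition evp (c : nat -> fam) (P : {poly CC}) (N : nat) (i j : 'I_n) :=
  \sum_(k < N) P`_k *: c k i j.

Lemma evp_ext c (P : {poly CC}) N M (i j : 'I_n) : (size P <= N)%N -> (N <= M)%N ->
  evp c P M i j = evp c P N i j.
Proof.
move=> sP NM; rewrite /evp (big_ord_widen M (fun k => P`_k *: c k i j) NM).
rewrite [RHS]big_mkcond; apply eq_bigr => k _; case: ifP => // /negbT; rewrite -leqNgt => h.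
by rewrite nth_default ?scale0r // (leq_trans sP h).
Qed.

Lemma evp_lin c u (P Q : {poly CC}) N (i j : 'I_n) :
  evp c (u *: P + Q) N i j = u *: evp c P N i j + evp c Q N i j.
Proof.
rewrite /evp scaler_sumr -big_split; apply eq_bigr => k _.
by rewrite coefD coefZ scalerDl scalerA.
Qed.

Lemma evp0 c N (i j : 'I_n) : evp c 0 N i j = 0.
Proof. by rewrite /evp big1 // => k _; rewrite coef0 scale0r. Qed.

Lemma evp_sum c K (al : 'I_K -> CC) (P : 'I_K -> {poly CC}) N (i j : 'I_n) :
  evp c (\sum_(k < K) al k *: P k) N i j = \sum_(k < K) al k *: evp c (P k) N i j.
Proof.
rewrite /evp; under eq_bigr do rewrite coef_sum scaler_suml.
rewrite exchange_big; apply eq_bigr => r _; rewrite scaler_sumr.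
by apply eq_bigr => k _; rewrite coefZ scalerA.
Qed.

Lemma evp_Xn c m N (i j : 'I_n) : (m < N)%N -> evp c 'X^m N i j = c m i j.
Proof.
move=> hm; rewrite /evp; under eq_bigr do rewrite coefXn.
exact: (sum_sel (fun k => c k i j)).
Qed.

Lemma evp_shift c (P : {poly CC}) N (i j : 'I_n) :
  evp c ('X * P) N.+1 i j = evp (fun k => c k.+1) P N i j.
Proof.
rewrite /evp big_ord_recl coefXM /= scale0r add0r; apply eq_bigr => k _.
by rewrite coefXM /=.
Qed.

Lemma sum_sl N (al : 'I_N -> CC) (X : 'I_N -> A) y :
  (\sum_(r < N) al r *: X r) * y = \sum_(r < N) al r *: (X r * y).
Proof. by rewrite mulr_suml; apply eq_bigr => r _; rewrite scalerAl. Qed.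
Lemma sum_sr N (al : 'I_N -> CC) (X : 'I_N -> A) y :
  y * (\sum_(r < N) al r *: X r) = \sum_(r < N) al r *: (y * X r).
Proof. by rewrite mulr_sumr; apply eq_bigr => r _; rewrite scalerAr. Qed.

Definition Dd (U U' V V' : fam) (i j k l : 'I_n) : A :=
  comm (U' i j) (V k l) - comm (U i j) (V' k l) - (U k j * V i l - V k j * U i l).

Lemma Dd_suml N (al : nat -> CC) (F F' : nat -> fam) (V V' : fam) (i j k l : 'I_n) :
  Dd (fun i j => \sum_(r < N) al r *: F r i j) (fun i j => \sum_(r < N) al r *: F' r i j)
     V V' i j k l = \sum_(r < N) al r *: Dd (F r) (F' r) V V' i j k l.
Proof.
rewrite /Dd /comm /= !sum_sl !sum_sr.
under [X in _ = X]eq_bigr do rewrite !scalerBr.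
by rewrite !sumrB.
Qed.

Lemma Dd_sumr N (al : nat -> CC) (F F' : nat -> fam) (U U' : fam) (i j k l : 'I_n) :
  Dd U U' (fun i j => \sum_(r < N) al r *: F r i j) (fun i j => \sum_(r < N) al r *: F' r i j)
     i j k l = \sum_(r < N) al r *: Dd U U' (F r) (F' r) i j k l.
Proof.
rewrite /Dd /comm /= !sum_sl !sum_sr.
under [X in _ = X]eq_bigr do rewrite !scalerBr.
by rewrite !sumrB.
Qed.

Lemma Dd_bil N M (al be : nat -> CC) (F F' G G' : nat -> fam) (i j k l : 'I_n) :
  (forall r s, Dd (F r) (F' r) (G s) (G' s) i j k l = 0) ->
  Dd (fun i j => \sum_(r < N) al r *: F r i j) (fun i j => \sum_(r < N) al r *: F' r i j)
     (fun i j => \sum_(r < M) be r *: G r i j) (fun i j => \sum_(r < M) be r *: G' r i j)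
     i j k l = 0.
Proof.
move=> H; rewrite Dd_suml big1 // => r _; rewrite Dd_sumr big1 ?scaler0 // => s _.
by rewrite H scaler0.
Qed.

End Alg.

Section Crd.
Variables (a b : nat -> CC).
Local Notation p := (orthpoly a b).

Fixpoint crd (N : nat) (P : {poly CC}) (k : nat) : CC :=
  if N is N'.+1 then (if k == N' then P`_N' else crd N' (P - P`_N' *: p N') k) else 0.

Lemma crd_S N P k : crd N.+1 P k = if k == N then P`_N else crd N (P - P`_N *: p N) k.
Proof. by []. Qed.

Lemma crd0 N k : crd N 0 k = 0.
Proof. elim: N => //= N IH; rewrite coef0 scale0r subr0 IH; by case: ifP. Qed.

Lemma crd_lin N u (P Q : {poly CC}) k : crd N (u *: P + Q) k = u * crd N P k + crd N Q k.
Proof.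
elim: N P Q => [|N IH] P Q /=; first by rewrite mulr0 addr0.
case: (k == N); first by rewrite coefD coefZ.
rewrite -IH; congr crd; rewrite coefD coefZ -!mul_polyC polyCD polyCM; ring.
Qed.

Lemma crd_sum N K (al : 'I_K -> CC) (P : 'I_K -> {poly CC}) k :
  crd N (\sum_(r < K) al r *: P r) k = \sum_(r < K) al r * crd N (P r) k.
Proof.
have hadd : {morph (fun P => crd N P k) : x y / x + y >-> x + y}.
  by move=> x y /=; have := crd_lin N 1 x y k; rewrite scale1r mul1r.
rewrite (big_morph (fun P => crd N P k) hadd (crd0 N k)).
apply eq_bigr => r _; have := crd_lin N (al r) (P r) 0 k.
by rewrite addr0 crd0 addr0.
Qed.

Lemma crd_rec N (P : {poly CC}) : (size P <= N)%N -> P = \sum_(k < N) crd N P k *: p k.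
Proof.
elim: N P => [|N IH] P sP.
  by move: sP; rewrite leqn0 size_poly_eq0 => /eqP ->; rewrite big_ord0.
rewrite big_ord_recr crd_S eqxx.
set Q := P - P`_N *: p N.
have E : forall k : 'I_N, crd N.+1 P (widen_ord (leqnSn N) k) *: p (widen_ord (leqnSn N) k)
     = crd N Q k *: p k.
  by move=> k; rewrite crd_S /= ltn_eqF.
rewrite (eq_bigr _ (fun k _ => E k)) -IH; first by rewrite /Q; apply/esym; apply: subrK.
apply/leq_sizeP => j hj; rewrite /Q coefB coefZ.
move: hj; rewrite leq_eqVlt => /orP [/eqP <-|hj]; first by rewrite p_top mulr1 subrr.
rewrite p_hi // mulr0 subr0 nth_default //; exact: leq_trans sP hj.
Qed.

Lemma crd_p N m k : (m < N)%N -> (k < N)%N -> crd N (p m) k = (k == m)%:R.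
Proof.
elim: N => // N IH hm hk; rewrite crd_S.
have [->|kN] := eqVneq k N.
  move: hm; rewrite ltnS leq_eqVlt => /orP [/eqP ->|hm].
    by rewrite p_top eqxx.
  by rewrite p_hi // (gtn_eqF hm).
have hk' : (k < N)%N by rewrite ltn_neqAle kN -ltnS.
move: hm; rewrite ltnS leq_eqVlt => /orP [/eqP ->|hm].
  by rewrite p_top scale1r subrr crd0 (negbTE kN).
by rewrite p_hi // scale0r subr0 IH.
Qed.
End Crd.

Section Alg2.
Variables (n : nat) (a b : nat -> CC) (A : algType CC).
Local Notation p := (orthpoly a b).
Local Notation fam := ('I_n -> 'I_n -> A).

Definition Lm (c : nat -> fam) M (P : {poly CC}) (i j : 'I_n) :=
  \sum_(k < M) crd a b M P k *: c k i j.

Lemma Lm_lin c M u (P Q : {poly CC}) (i j : 'I_n) :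
  Lm c M (u *: P + Q) i j = u *: Lm c M P i j + Lm c M Q i j.
Proof.
rewrite /Lm scaler_sumr -big_split; apply eq_bigr => k _.
by rewrite crd_lin scalerDl scalerA.
Qed.

Lemma Lm0 c M (i j : 'I_n) : Lm c M 0 i j = 0.
Proof. by rewrite /Lm big1 // => k _; rewrite crd0 scale0r. Qed.

Lemma Lm_sum c M K (al : 'I_K -> CC) (P : 'I_K -> {poly CC}) (i j : 'I_n) :
  Lm c M (\sum_(r < K) al r *: P r) i j = \sum_(r < K) al r *: Lm c M (P r) i j.
Proof.
rewrite /Lm; under eq_bigr do rewrite crd_sum scaler_suml.
rewrite exchange_big; apply eq_bigr => r _; rewrite scaler_sumr.
by apply eq_bigr => k _; rewrite scalerA.
Qed.

Lemma Lm_p c M m (i j : 'I_n) : (m < M)%N -> Lm c M (p m) i j = c m i j.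
Proof.
move=> hm; rewrite /Lm; under eq_bigr => k _ do rewrite (crd_p a b hm (ltn_ord k)).
exact: (sum_sel (fun k => c k i j)).
Qed.
End Alg2.

Lemma morph_tcoef n (A B : algType CC) (f : {lrmorphism A -> B}) (g : gens n A) (h : gens n B) :
  (forall r i j, f (g r i j) = h r i j) -> forall m i j, f (tcoef g m i j) = tcoef h m i j.
Proof. move=> H [|m] i j /=; [exact: rmorph_nat | exact: H]. Qed.

Lemma morph_sum (A B : algType CC) (f : {lrmorphism A -> B}) K (al : 'I_K -> CC) (x : 'I_K -> A) :
  f (\sum_(k < K) al k *: x k) = \sum_(k < K) al k *: f (x k).
Proof. by rewrite linear_sum; apply eq_bigr => k _; rewrite linearZ. Qed.

Lemma poly_expand (P : {poly CC}) N : (size P <= N)%N -> \sum_(k < N) P`_k *: 'X^k = P.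
Proof.
move=> sP; rewrite -poly_def; apply/polyP => k; rewrite coef_poly.
case: ifP => // /negbT; rewrite -leqNgt => h; by rewrite nth_default // (leq_trans sP h).
Qed.

Lemma evp_add n (A : algType CC) (c : nat -> 'I_n -> 'I_n -> A) (P Q : {poly CC}) N i j :
  evp c (P + Q) N i j = evp c P N i j + evp c Q N i j.
Proof. by have := evp_lin c 1 P Q N i j; rewrite !scale1r. Qed.
Lemma evp_scale n (A : algType CC) (c : nat -> 'I_n -> 'I_n -> A) u (P : {poly CC}) N i j :
  evp c (u *: P) N i j = u *: evp c P N i j.
Proof. by have := evp_lin c u P 0 N i j; rewrite !addr0 evp0 addr0. Qed.
Lemma Lm_add n a b (A : algType CC) (c : nat -> 'I_n -> 'I_n -> A) (P Q : {poly CC}) N i j :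
  Lm a b c N (P + Q) i j = Lm a b c N P i j + Lm a b c N Q i j.
Proof. by have := Lm_lin a b c N 1 P Q i j; rewrite !scale1r. Qed.
Lemma Lm_scale n a b (A : algType CC) (c : nat -> 'I_n -> 'I_n -> A) u (P : {poly CC}) N i j :
  Lm a b c N (u *: P) i j = u *: Lm a b c N P i j.
Proof. by have := Lm_lin a b c N u P 0 i j; rewrite !addr0 Lm0 addr0. Qed.

Section Main.
Variables (n : nat) (a b : nat -> CC) (Y : algType CC) (t : gens n Y) (OY : algType CC) (tt : gens n OY).
Local Notation p := (orthpoly a b).

Definition hh : gens n Y := fun r i j => evp (tcoef t) (p r.+1) (size (p r.+1)) i j.

Lemma tcoef_h m N i j : (m < N)%N -> tcoef hh m i j = evp (tcoef t) (p m) N i j.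
Proof.
case: m => [|m] hm.
  have -> : p 0 = 'X^0 by rewrite expr0.
  by rewrite evp_Xn.
by rewrite /= /hh (evp_ext _ _ _ (leqnn _) (leq_trans (size_p _ _ _) hm)).
Qed.

Lemma shift_h r i j : oy_shift a b hh r i j = evp (fun k => tcoef t k.+1) (p r) r.+2 i j.
Proof.
rewrite -evp_shift Xp !evp_add !evp_scale /oy_shift.
have h1 : (r.+1 < r.+3)%N by rewrite ltnS leqnSn.
have h2 : (r < r.+3)%N by rewrite ltnS leqW.
rewrite (tcoef_h _ _ h1) (tcoef_h _ _ h2).
case: r h1 h2 => [|r] h1 h2 /=; first by rewrite evp0.
by rewrite (tcoef_h _ _ (ltnW h2)).
Qed.

Lemma hrel : yangian_rel t -> oy_rel a b hh.
Proof.
move=> YR r s i j k l.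
apply/eqP; rewrite -subr_eq0; apply/eqP.
rewrite !shift_h !(tcoef_h _ _ (leqnSn r.+1)) !(tcoef_h _ _ (leqnSn s.+1)).
refine (@Dd_bil n Y r.+2 s.+2 (fun k => (p r)`_k) (fun k => (p s)`_k) (tcoef t) (fun k => tcoef t k.+1)
   (tcoef t) (fun k => tcoef t k.+1) i j k l _).
by move=> r' s'; rewrite /Dd YR subrr.
Qed.

End Main.

Section Back.
Variables (n : nat) (a b : nat -> CC) (OY : algType CC) (tt : gens n OY).
Local Notation p := (orthpoly a b).

Definition dd r : 'I_n -> 'I_n -> OY := Lm a b (tcoef tt) r.+1 ('X^r).
Definition gg : gens n OY := fun r i j => dd r.+1 i j.

Lemma tcoef_g m i j : tcoef gg m i j = dd m i j.
Proof.
case: m => [|m] //=.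
rewrite /dd expr0 -(p0 a b) Lm_p //.
Qed.

Lemma Xn_rec r : 'X^r = \sum_(k < r.+1) crd a b r.+1 'X^r k *: p k.
Proof. by apply: crd_rec; rewrite size_polyXn. Qed.

Lemma dL r M i j : (r < M)%N -> dd r i j = Lm a b (tcoef tt) M ('X^r) i j.
Proof.
move=> hr; rewrite [in RHS]Xn_rec Lm_sum /dd {1}/Lm.
by apply eq_bigr => k _; rewrite Lm_p // (leq_trans (ltn_ord k) hr).
Qed.

Lemma dS r i j : dd r.+1 i j =
  \sum_(k < r.+1) crd a b r.+1 'X^r k *: oy_shift a b tt k i j.
Proof.
rewrite (dL (M := r.+2)) // exprS [in LHS]Xn_rec mulr_sumr.
under eq_bigr do rewrite -scalerAr Xp.
rewrite Lm_sum; apply eq_bigr => k _; congr (_ *: _).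
have hk := ltn_ord k.
rewrite !Lm_add !Lm_scale /oy_shift (Lm_p _ _ _ (m := k.+1)) ?ltnS //.
rewrite (Lm_p _ _ _ (m := k)); last by rewrite ltnS ltnW.
move: hk; case: (nat_of_ord k) => [|k'] hk /=; first by rewrite Lm0.
by rewrite Lm_p // ltnS ltnW // ltnW.
Qed.

Lemma grel : oy_rel a b tt -> yangian_rel gg.
Proof.
move=> OR r s i j k l.
apply/eqP; rewrite -subr_eq0; apply/eqP.
rewrite !tcoef_g !dS.
refine (@Dd_bil n OY r.+1 s.+1 (fun k => crd a b r.+1 'X^r k) (fun k => crd a b s.+1 'X^s k)
   (tcoef tt) (oy_shift a b tt) (tcoef tt) (oy_shift a b tt) i j k l _).
by move=> r' s'; rewrite /Dd OR subrr.
Qed.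
End Back.

Unset Implicit Arguments.

Theorem mainTheorem1 (n : nat) (a b : nat -> CC)
  (Y : algType CC) (t : gens n Y) (OY : algType CC) (tt : gens n OY) :
  (1 <= n)%N ->
  b 0%N = 0 ->
  (forall m : nat, (1 <= m)%N -> b m != 0) ->
  presented_by (@yangian_rel n) t ->
  presented_by (@oy_rel n a b) tt ->
  exists W : {lrmorphism OY -> Y},
    bijective W /\
    (forall (r : nat) (i j : 'I_n),
        W (tt r i j) = t r i j
          + \sum_(l < r.+1) (orthpoly a b r.+1)`_l *: tcoef t l i j) /\
    (forall (l : nat) (i j : 'I_n),
        W (tcoef tt l i j) = const_term (orthpoly a b l) (fun m => tcoef t m i j)
        /\ const_term (orthpoly a b l) (fun m => tcoef t m i j)
           = \sum_(m < l.+1) (orthpoly a b l)`_m *: tcoef t m i j).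
Proof.
move=> _ _ _ [YR YU] [OR OU].
have [[W Wh] _] := OU Y (hh a b t) (hrel a b YR).
have [[V Vg] _] := YU OY (gg a b tt) (grel OR).
have WT := morph_tcoef Wh.
have VT := morph_tcoef Vg.
have CT : forall l i j, const_term (orthpoly a b l) (fun m => tcoef t m i j)
    = evp (tcoef t) (orthpoly a b l) l.+1 i j.
  by move=> l i j; exact: (esym (evp_ext _ _ _ (leqnn _) (size_p _ _ _))).
exists W; split; last split.
- exists V.
  + move=> x; apply: ((OU OY tt OR).2 (V \o W) idfun) => // r i j /=.
    rewrite Wh /hh /= -(evp_ext _ _ _ (leqnn _) (size_p _ _ _)) /evp morph_sum.
    under eq_bigr => k _ do rewrite VT tcoef_g (dL _ _ _ _ _ (ltn_ord k)).
    rewrite -(Lm_sum _ _ _ _ (fun k : 'I_r.+2 => (orthpoly a b r.+1)`_k) (fun k : 'I_r.+2 => 'X^k)).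
    by rewrite poly_expand ?size_p // Lm_p.
  + move=> y; apply: ((YU Y t YR).2 (W \o V) idfun) => // r i j /=.
    rewrite Vg /gg /dd /Lm morph_sum.
    under eq_bigr => k _ do rewrite WT (tcoef_h _ _ _ _ _ (ltn_ord k)).
    rewrite -(evp_sum _ (fun k : 'I_r.+2 => crd a b r.+2 ('X^(r.+1)) k) (fun k : 'I_r.+2 => orthpoly a b k)).
    rewrite -crd_rec ?size_polyXn // evp_Xn //.
- move=> r i j; rewrite Wh /hh /= -(evp_ext _ _ _ (leqnn _) (size_p _ _ _)) /evp big_ord_recr /=.
  by rewrite p_top scale1r addrC.
- move=> l i j; rewrite CT; split => //.
  by rewrite WT (tcoef_h _ _ _ _ _ (ltnSn l)).
Qed.
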